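(* Let $A$ be a noetherian commutative $\mathbb N$-graded ring, $\mathfrak m=A_+$, and $I=(a_1,\dots,a_n)$ an ideal of $A$ with $\mathrm{depth}_{\mathfrak m}(A)>\mathrm{depth}_I(A)$. Then $H^0_{\mathfrak m}\big(H_{n-\mathrm{depth}_I(A)}(\mathbf a;A)\big)=0$, where $H_\bullet(\mathbf a;A)$ is the Koszul homology of $a_1,\dots,a_n$ over $A$.
   Context: $H^0_{\mathfrak m}(N)=\{x\in N:\exists m,\ \mathfrak m^mx=0\}$. $\mathrm{depth}_{\mathfrak a}(A)$ is the grade of the ideal $\mathfrak a$ on $A$. *)

(* Defs.v *)
From mathcomp Require Import all_boot all_order all_algebra.
Set Implicit Arguments. Unset Strict Implicit. Unset Printing Implicit Defensive.
Import GRing.Theory.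
Local Open Scope ring_scope.

Section Defs.
Variable A : comNzRingType.

Definition is_ideal (P : A -> Prop) : Prop :=
  P 0 /\ (forall x y, P x -> P y -> P (x + y)) /\ (forall r x, P x -> P (r * x)).

Definition noetherian : Prop :=
  forall J : nat -> A -> Prop, (forall k, is_ideal (J k)) ->
    (forall k x, J k x -> J k.+1 x) ->
    exists N, forall k x, (N <= k)%N -> J k x -> J N x.

Definition ideal_gen (s : seq A) (x : A) : Prop :=
  exists c : nat -> A, x = \sum_(i < size s) c i * s`_i.

Definition is_Ngrading (G : nat -> A -> Prop) : Prop :=
  (forall i, G i 0 /\ (forall x y, G i x -> G i y -> G i (x - y))) /\
  (forall i j x y, G i x -> G j y -> G (i + j)%N (x * y)) /\
  (forall x, exists (f : nat -> A) (N : nat),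
      (forall i, G i (f i)) /\ x = \sum_(i < N) f i) /\
  (forall (f : nat -> A) (N : nat), (forall i, G i (f i)) ->
      \sum_(i < N) f i = 0 -> forall i, (i < N)%N -> f i = 0).

Definition Aplus (G : nat -> A -> Prop) (x : A) : Prop :=
  exists (f : nat -> A) (N : nat),
    (forall i, G i (f i)) /\ f 0%N = 0 /\ x = \sum_(i < N) f i.

Definition regular_seq_in (I : A -> Prop) (s : seq A) : Prop :=
  (forall i, (i < size s)%N -> I s`_i) /\
  (forall i, (i < size s)%N -> forall y,
      ideal_gen (take i s) (s`_i * y) -> ideal_gen (take i s) y) /\
  ~ ideal_gen s 1.

Definition grade_ge (I : A -> Prop) (k : nat) : Prop :=
  exists s, size s = k /\ regular_seq_in I s.

(* grade of a proper ideal I on A equals d (maximal length of a regular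
   sequence in I); the unit ideal has grade infinity and is excluded *)
Definition grade_eq (I : A -> Prop) (d : nat) : Prop :=
  ~ I 1 /\ grade_ge I d /\ ~ grade_ge I d.+1.

Definition prod_ideal (P Q : A -> Prop) (x : A) : Prop :=
  exists (N : nat) (p q : nat -> A),
    (forall i, P (p i)) /\ (forall i, Q (q i)) /\ x = \sum_(i < N) p i * q i.

Definition ideal_pow (P : A -> Prop) (t : nat) : A -> Prop :=
  iter t (prod_ideal P) (fun _ => True).

(* Koszul complex K(a;A): chains are A-valued functions on subsets of 'I_n
   (coefficients w.r.t. the basis e_S of the exterior algebra), with
   d(e_S) = sum_{j in S} (-1)^{#{i in S | i < j}} a_j e_{S \ j}. *)
Definition kchain (n : nat) (k : nat) (x : {ffun {set 'I_n} -> A}) : Prop :=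
  forall T : {set 'I_n}, #|T| != k -> x T = 0.

Definition kdiff (n : nat) (a : 'I_n -> A) (x : {ffun {set 'I_n} -> A})
  : {ffun {set 'I_n} -> A} :=
  [ffun T : {set 'I_n} => \sum_(j | j \notin T)
      (-1) ^+ #|[set i in T | (i < j)%N]| * a j * x (j |: T)].

Definition kcycle (n : nat) (a : 'I_n -> A) (k : nat) x : Prop :=
  kchain k x /\ kdiff a x = 0.

Definition kboundary (n : nat) (a : 'I_n -> A) (k : nat) x : Prop :=
  exists y, kchain k.+1 y /\ x = kdiff a y.

Definition kscale (n : nat) (y : A) (x : {ffun {set 'I_n} -> A})
  : {ffun {set 'I_n} -> A} := [ffun T => y * x T].

End Defs.

(* Main.v *)
Require Import Defs.
From mathcomp Require Import all_boot all_order all_algebra ring.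
From Stdlib Require Import IndefiniteDescription Lia.
From mathcomp Require Import zify.
Set Implicit Arguments. Unset Strict Implicit. Unset Printing Implicit Defensive.
Import GRing.Theory.
Local Open Scope ring_scope.

Section K.
Variable A : comNzRingType.
Implicit Types (s : seq A) (u v : A).

Lemma sum_ord_eq m n (e : m = n) (F : nat -> A) :
  \sum_(i < m) F i = \sum_(i < n) F i.
Proof. by subst. Qed.

Lemma ig0 s : ideal_gen s 0.
Proof. by exists (fun _ => 0); rewrite big1 // => i _; rewrite mul0r. Qed.

Lemma igD s u v : ideal_gen s u -> ideal_gen s v -> ideal_gen s (u + v).
Proof.
case=> c -> [e ->]; exists (fun i => c i + e i).
by rewrite -big_split /=; apply: eq_bigr => i _; rewrite mulrDl.
Qed.

Lemma igM s r u : ideal_gen s u -> ideal_gen s (r * u).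
Proof.
case=> c ->; exists (fun i => r * c i).
by rewrite mulr_sumr; apply: eq_bigr => i _; rewrite mulrA.
Qed.

Lemma igMr s r u : ideal_gen s u -> ideal_gen s (u * r).
Proof. by rewrite mulrC; apply: igM. Qed.

Lemma igN s u : ideal_gen s u -> ideal_gen s (- u).
Proof. by move=> h; rewrite -mulN1r; apply: igM. Qed.

Lemma igB s u v : ideal_gen s u -> ideal_gen s v -> ideal_gen s (u - v).
Proof. by move=> hu hv; apply: igD => //; apply: igN. Qed.

Lemma igsum s (I : finType) (P : pred I) (F : I -> A) :
  (forall i, P i -> ideal_gen s (F i)) -> ideal_gen s (\sum_(i | P i) F i).
Proof.
by move=> h; apply: (big_ind (ideal_gen s)) => //; [apply: ig0 | apply: igD].
Qed.

Lemma ig_nil u : ideal_gen [::] u <-> u = 0.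
Proof.
split; first by case=> c ->; rewrite big_ord0.
by move=> ->; apply: ig0.
Qed.

Lemma ig_nth s i : (i < size s)%N -> ideal_gen s s`_i.
Proof.
move=> hi; exists (fun k => if k == i then 1 else 0).
rewrite (bigD1 (Ordinal hi)) //= eqxx mul1r big1 ?addr0 // => k hk.
by rewrite -(inj_eq val_inj) /= in hk; rewrite (negbTE hk) mul0r.
Qed.

Lemma ig_takeS s i u : (i < size s)%N ->
  ideal_gen (take i.+1 s) u <-> exists w v, ideal_gen (take i s) w /\ u = w + s`_i * v.
Proof.
move=> hi; have hs1 : size (take i.+1 s) = i.+1 by rewrite size_takel.
have hs0 : size (take i s) = i by rewrite size_takel // ltnW.
split.
  case=> c ->; rewrite (sum_ord_eq hs1 (fun k => c k * (take i.+1 s)`_k)) big_ord_recr /=.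
  exists (\sum_(k < i) c k * (take i.+1 s)`_k), (c i); split; last first.
    by rewrite nth_take // mulrC.
  exists c; rewrite (sum_ord_eq hs0 (fun k => c k * (take i s)`_k)).
  by apply: eq_bigr => k _; rewrite !nth_take // (ltn_trans (ltn_ord k)).
case=> w [v [[c ->] ->]].
exists (fun k => if k == i then v else c k).
rewrite (sum_ord_eq hs1 (fun k => (if k == i then v else c k) * (take i.+1 s)`_k)) big_ord_recr /= eqxx nth_take // mulrC.
congr (_ + _).
rewrite (sum_ord_eq hs0 (fun k => c k * (take i s)`_k)).
apply: eq_bigr => k _; rewrite (ltn_eqF (ltn_ord k)) !nth_take //.
exact: (ltn_trans (ltn_ord k)).
Qed.

Lemma ig_take_sub s i u : (i < size s)%N ->
  ideal_gen (take i s) u -> ideal_gen (take i.+1 s) u.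
Proof.
move=> hi h; apply/ig_takeS => //; exists u, 0; split => //.
by rewrite mulr0 addr0.
Qed.

Lemma ig_take_last s i : (i < size s)%N -> ideal_gen (take i.+1 s) s`_i.
Proof.
move=> hi; apply/ig_takeS => //; exists 0, 1; split; first exact: ig0.
by rewrite add0r mulr1.
Qed.
Section KZ.
Variable N : nat.
Variable b : 'I_N -> A.
Local Notation ch := {ffun {set 'I_N} -> A}.
Definition eps (S : {set 'I_N}) (j : 'I_N) : A := (-1) ^+ #|[set i in S | (i < j)%N]|.

Lemma eps_sq (S : {set 'I_N}) (j : 'I_N) : eps S j * eps S j = 1.
Proof. by rewrite /eps -exprD -signr_odd oddD addbb. Qed.

Lemma epsU (k : 'I_N) (S : {set 'I_N}) (j : 'I_N) : k \notin S ->
  eps (k |: S) j = (if (k < j)%N then -1 else 1) * eps S j.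
Proof.
move=> hk; rewrite /eps.
have -> : [set i in k |: S | (i < j)%N] =
  if (k < j)%N then k |: [set i in S | (i < j)%N] else [set i in S | (i < j)%N].
  case hkj: (k < j)%N; apply/setP => i; rewrite !inE;
  by case: eqVneq => [->|] /=; rewrite ?hkj ?(negbTE hk) ?andbF.
case: (k < j)%N; last by rewrite mul1r.
by rewrite cardsU1 inE (negbTE hk) /= exprS.
Qed.

Lemma kdiffE (x : ch) (T : {set 'I_N}) : kdiff b x T =
  \sum_(j | j \notin T) eps T j * b j * x (j |: T).
Proof. by rewrite /kdiff ffunE. Qed.

Lemma antisym_sum (F : 'I_N -> 'I_N -> A) :
  (forall j k, F j k + F k j = 0) -> (forall j, F j j = 0) ->
  \sum_j \sum_k F j k = 0.
Proof.
move=> hF hd; rewrite pair_bigA /=.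
rewrite (bigID (fun p : 'I_N * 'I_N => (p.1 < p.2)%N)) /=.
rewrite [X in _ + X](bigID (fun p : 'I_N * 'I_N => (p.2 < p.1)%N)) /=.
rewrite [X in _ + (_ + X)]big1 ?addr0; last first.
  case=> j k /= /andP[]; rewrite -!leqNgt => h1 h2.
  have /eqP -> : j == k by rewrite -(inj_eq val_inj) eqn_leq h1 h2.
  exact: hd.
have hinj : injective (fun p : 'I_N * 'I_N => (p.2, p.1)) by case=> ? ? [] ? ? [] -> ->.
rewrite [X in _ + X](reindex_inj hinj) /=.
rewrite [X in _ + X](eq_bigl (fun p : 'I_N * 'I_N => (p.1 < p.2)%N)); last first.
  by case=> j k /=; case: ltngtP.
by rewrite -big_split /= big1 // => p _; apply: hF.
Qed.

Lemma kdiffK (x : ch) : kdiff b (kdiff b x) = 0.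
Proof.
apply/ffunP => T; rewrite [RHS]ffunE kdiffE /=.
pose F j k := if [&& j \notin T, k \notin T & j != k] then
  eps T j * b j * (eps (j |: T) k * b k * x (k |: (j |: T))) else 0.
transitivity (\sum_j \sum_k F j k); last first.
  apply: antisym_sum => [j k|j]; last by rewrite /F eqxx !andbF.
  rewrite /F; case hj: (j \notin T); case hk: (k \notin T); rewrite /= ?addr0 //.
  case: (eqVneq j k) => [->|hjk]; first by rewrite /= addr0.
  rewrite /= !epsU // setUCA.
  case: ltngtP => h; first by rewrite mulN1r mul1r; ring.
    by rewrite mulN1r mul1r; ring.
  by move: hjk; rewrite -(inj_eq val_inj) /= h eqxx.
rewrite big_mkcond; apply: eq_bigr => j _.
case hj: (j \notin T) => /=; last by rewrite big1 // => k _; rewrite /F hj.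
rewrite kdiffE mulr_sumr big_mkcond; apply: eq_bigr => k _.
rewrite /F hj in_setU1 negb_or [k == j]eq_sym.
by case: (k \notin T); case: (j != k).
Qed.

Definition hk (k : 'I_N) (x : ch) : ch :=
  [ffun T : {set 'I_N} => if k \in T then eps (T :\ k) k * x (T :\ k) else 0].

Lemma homot (k : 'I_N) (x : ch) (T : {set 'I_N}) :
  kdiff b (hk k x) T + hk k (kdiff b x) T = b k * x T.
Proof.
rewrite kdiffE [hk k _ T]ffunE.
case: (boolP (k \in T)) => hkT; last first.
  rewrite addr0 (bigD1 k) //= big1 ?addr0.
    rewrite ffunE setU11 setU1K //.
    by transitivity (eps T k * eps T k * (b k * x T)); [ring | rewrite eps_sq mul1r].
  move=> j /andP[hj hjk]; rewrite ffunE in_setU1 eq_sym (negbTE hjk) /=.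
  by rewrite (negbTE hkT) mulr0.
rewrite kdiffE [X in eps _ _ * X](bigD1 k) ?setD11 //= setD1K // mulrDr.
rewrite [eps _ _ * (eps _ _ * _ * _)]mulrA mulrA eps_sq mul1r.
rewrite addrCA -[RHS]addr0; congr (_ + _).
rewrite mulr_sumr [X in _ + X](eq_bigl (fun j => j \notin T)); last first.
  by move=> j; rewrite in_setD1 negb_and negbK; case: (eqVneq j k) => [->|] /=; rewrite ?hkT ?andbT ?andbF.
rewrite [X in X + _](eq_bigl (fun j => j \notin T)) //.
rewrite -big_split /=.
apply: big1 => j hj; rewrite ffunE setU1r //.
have hjk : j != k by apply: contraNneq hj => ->.
have hjT : j \notin T :\ k by rewrite in_setD1 (negbTE hj) andbF.
have -> : (j |: T) :\ k = j |: (T :\ k).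
  by apply/setP => i; rewrite !inE; case: (eqVneq i j) => [->|] /=; rewrite ?(negbTE hjk) ?andbT //. 
rewrite epsU // -{1}(setD1K hkT) epsU ?setD11 //.
case: ltngtP => h; first by rewrite !mul1r; ring.
  by rewrite !mul1r; ring.
by move: hjk; rewrite -(inj_eq val_inj) /= h eqxx.
Qed.


Lemma kdiffD (x y : ch) : kdiff b (x + y) = kdiff b x + kdiff b y.
Proof.
apply/ffunP => T; rewrite kdiffE [RHS]ffunE !kdiffE -big_split /=.
by apply: eq_bigr => j _; rewrite ffunE mulrDr.
Qed.

Lemma kdiffN (x : ch) : kdiff b (- x) = - kdiff b x.
Proof.
apply/ffunP => T; rewrite kdiffE [RHS]ffunE !kdiffE -sumrN.
by apply: eq_bigr => j _; rewrite ffunE mulrN.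
Qed.

Lemma kdiffB (x y : ch) : kdiff b (x - y) = kdiff b x - kdiff b y.
Proof. by rewrite kdiffD kdiffN. Qed.

Lemma kdiffZ v (x : ch) : kdiff b (kscale v x) = kscale v (kdiff b x).
Proof.
apply/ffunP => T; rewrite kdiffE [RHS]ffunE !kdiffE mulr_sumr.
by apply: eq_bigr => j _; rewrite ffunE; ring.
Qed.

Lemma kdiff0 : kdiff b (0 : ch) = 0.
Proof. by apply/ffunP => T; rewrite kdiffE [RHS]ffunE big1 // => j _; rewrite ffunE mulr0. Qed.

Lemma kdiffJ s (x : ch) : (forall T, ideal_gen s (x T)) ->
  forall T, ideal_gen s (kdiff b x T).
Proof. by move=> h T; rewrite kdiffE; apply: igsum => j _; apply: igM. Qed.

Lemma kchain_diff k (x : ch) : kchain k.+1 x -> kchain k (kdiff b x).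
Proof.
move=> h T hT; rewrite kdiffE big1 // => j hj; rewrite h ?mulr0 //.
by rewrite cardsU1 hj.
Qed.

Lemma kchain_big k (x : ch) : (N < k)%N -> kchain k x -> x = 0.
Proof.
move=> hk h; apply/ffunP => T; rewrite ffunE h //.
apply: contraTneq hk => <-; rewrite -leqNgt.
by rewrite (leq_trans (subset_leq_card (subsetT T))) // cardsT card_ord.
Qed.

Definition res k (x : ch) : ch := [ffun T : {set 'I_N} => if #|T| == k then x T else 0].

Lemma res_chain k (x : ch) : kchain k (res k x).
Proof. by move=> T hT; rewrite ffunE (negbTE hT). Qed.

Lemma kdiff_res k (x : ch) : kdiff b (res k.+1 x) = res k (kdiff b x).
Proof.
apply/ffunP => T; rewrite kdiffE [RHS]ffunE.
case: eqVneq => hT.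
  rewrite kdiffE; apply: eq_bigr => j hj; rewrite ffunE cardsU1 hj hT eqxx //.
by rewrite big1 // => j hj; rewrite ffunE cardsU1 hj add1n eqSS (negbTE hT) mulr0.
Qed.

Lemma resJ s k (x : ch) : (forall T, ideal_gen s (x T)) -> forall T, ideal_gen s (res k x T).
Proof. by move=> h T; rewrite ffunE; case: ifP => _; [apply: h | apply: ig0]. Qed.

Lemma res_id k (x : ch) : kchain k x -> res k x = x.
Proof.
move=> h; apply/ffunP => T; rewrite ffunE; case: eqVneq => // hT.
by rewrite h.
Qed.

Lemma kchainD k (x y : ch) : kchain k x -> kchain k y -> kchain k (x + y).
Proof. by move=> hx hy T hT; rewrite ffunE hx // hy // addr0. Qed.

Lemma kchainN k (x : ch) : kchain k x -> kchain k (- x).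
Proof. by move=> hx T hT; rewrite ffunE hx // oppr0. Qed.

Lemma kchainB k (x y : ch) : kchain k x -> kchain k y -> kchain k (x - y).
Proof. by move=> hx hy; apply: kchainD => //; apply: kchainN. Qed.

Lemma kchainZ k v (x : ch) : kchain k x -> kchain k (kscale v x).
Proof. by move=> hx T hT; rewrite ffunE hx // mulr0. Qed.

Lemma kchain_hk k j (x : ch) : kchain k x -> kchain k.+1 (hk j x).
Proof.
move=> h T hT; rewrite ffunE; case: ifP => // hj; rewrite h ?mulr0 //.
apply: contra hT => /eqP hc; by rewrite (cardsD1 j T) hj hc.
Qed.

Definition span (s0 : A) := exists c : 'I_N -> A, s0 = \sum_k c k * b k.

Lemma kill s (s0 : A) k (w : ch) : span s0 -> kchain k w ->
  (forall T, ideal_gen s (kdiff b w T)) ->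
  exists z, kchain k.+1 z /\ forall T, ideal_gen s (s0 * w T - kdiff b z T).
Proof.
case=> c -> hw hdw.
exists [ffun T => \sum_l c l * hk l w T]; split.
  move=> T hT; rewrite ffunE big1 // => l _; rewrite (kchain_hk l hw) ?mulr0 //.
move=> T; rewrite kdiffE.
have -> : \sum_(j | j \notin T) eps T j * b j * [ffun T0 => \sum_l c l * hk l w T0] (j |: T)
   = \sum_l c l * kdiff b (hk l w) T.
  rewrite (eq_bigr (fun j => \sum_l c l * (eps T j * b j * hk l w (j |: T)))); last first.
    by move=> j _; rewrite ffunE mulr_sumr; apply: eq_bigr => l _; ring.
  rewrite exchange_big /=; apply: eq_bigr => l _; rewrite kdiffE mulr_sumr //.
rewrite mulr_suml -sumrB; apply: igsum => l _.
rewrite -mulrA; have <- := homot l w T.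
rewrite mulrDr addrAC subrr add0r; apply: igM; rewrite ffunE; case: ifP => _; last exact: ig0.
by apply: igM.
Qed.

Lemma chB (x y : ch) T : (x - y) T = x T - y T.
Proof. by rewrite !ffunE. Qed.
Lemma chD (x y : ch) T : (x + y) T = x T + y T.
Proof. by rewrite !ffunE. Qed.
Lemma chZ v (x : ch) T : kscale v x T = v * x T.
Proof. by rewrite !ffunE. Qed.

Lemma decomp s i (f : ch) : (i < size s)%N ->
  (forall T, ideal_gen (take i.+1 s) (f T)) ->
  exists u v : ch, (forall T, ideal_gen (take i s) (u T)) /\ f = u + kscale s`_i v.
Proof.
move=> hi hf.
have H : forall T, exists p : A * A, ideal_gen (take i s) p.1 /\ f T = p.1 + s`_i * p.2.
  move=> T; have [w [v [h1 h2]]] := (ig_takeS (f T) hi).1 (hf T).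
  by exists (w, v).
pose g T := proj1_sig (constructive_indefinite_description _ (H T)).
have hg T : ideal_gen (take i s) (g T).1 /\ f T = (g T).1 + s`_i * (g T).2.
  exact: (proj2_sig (constructive_indefinite_description _ (H T))).
exists [ffun T => (g T).1], [ffun T => (g T).2]; split.
  by move=> T; rewrite ffunE; case: (hg T).
by apply/ffunP => T; rewrite !ffunE; case: (hg T).
Qed.

Definition cycm s k (w : ch) := kchain k w /\ forall T, ideal_gen s (kdiff b w T).
Definition bndm s k (w : ch) :=
  exists z, kchain k.+1 z /\ forall T, ideal_gen s (w T - kdiff b z T).

Lemma ig_take_mono s i u : (i < size s)%N ->
  ideal_gen (take i s) u -> ideal_gen (take i.+1 s) u.
Proof. exact: ig_take_sub. Qed.

Definition regseq (x : seq A) :=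
  forall i, (i < size x)%N -> forall y,
    ideal_gen (take i x) (x`_i * y) -> ideal_gen (take i x) y.

Lemma vanish (x : seq A) : (forall i, (i < size x)%N -> span x`_i) -> regseq x ->
  forall r i, r = (size x - i)%N -> (i <= size x)%N -> forall k, (N < k + r)%N ->
  forall w, cycm (take i x) k w -> bndm (take i x) k w.
Proof.
move=> hsp hreg; elim=> [|r IH] i hr hi k hk w [hwc hwd].
  rewrite addn0 in hk; rewrite (kchain_big hk hwc).
  exists 0; split; first by move=> T _; rewrite ffunE.
  by move=> T; rewrite kdiff0 !ffunE subrr; apply: ig0.
have hi' : (i < size x)%N by rewrite -subn_gt0 -hr.
have [z [hzc hz]] := kill (hsp i hi') hwc hwd.
have hzJ : cycm (take i.+1 x) k.+1 z.
  split => // T.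
  have -> : kdiff b z T = x`_i * w T - (x`_i * w T - kdiff b z T) by rewrite subKr.
  apply: igB; first by apply: igMr; apply: ig_take_last.
  by apply: ig_take_sub.
have hr' : r = (size x - i.+1)%N by rewrite subnS -hr.
have hk' : (N < k.+1 + r)%N by rewrite addSnnS.
have [e [hec he]] := IH i.+1 hr' hi' k.+1 hk' z hzJ.
have he' : forall T, ideal_gen (take i.+1 x) ((z - kdiff b e) T).
  by move=> T; rewrite chB.
have [u [v [hu huv]]] := decomp hi' he'.
have hdz : kdiff b z = kdiff b u + kscale x`_i (kdiff b v).
  by rewrite -kdiffZ -kdiffD -huv kdiffB kdiffK subr0.
exists (res k.+1 v); split; first exact: res_chain.
move=> T; rewrite kdiff_res ffunE; case: eqVneq => hT; last first.
  by rewrite hwc // subrr; apply: ig0.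
apply: hreg => //; rewrite mulrBr.
have -> : x`_i * kdiff b v T = kdiff b z T - kdiff b u T.
  by rewrite hdz !ffunE addrAC subrr add0r.
rewrite opprB addrA addrAC; apply: igD; first exact: hz.
exact: kdiffJ.
Qed.

Lemma lift (x : seq A) i k (w z : ch) : regseq x -> (i < size x)%N ->
  kchain k w ->
  (forall T, ideal_gen (take i x) (x`_i * w T - kdiff b z T)) ->
  bndm (take i.+1 x) k.+1 z -> bndm (take i x) k w.
Proof.
move=> hreg hi' hwc hz [e [hec he]].
have he' : forall T, ideal_gen (take i.+1 x) ((z - kdiff b e) T).
  by move=> T; rewrite chB.
have [u [v [hu huv]]] := decomp hi' he'.
have hdz : kdiff b z = kdiff b u + kscale x`_i (kdiff b v).
  by rewrite -kdiffZ -kdiffD -huv kdiffB kdiffK subr0.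
exists (res k.+1 v); split; first exact: res_chain.
move=> T; rewrite kdiff_res ffunE; case: eqVneq => hT; last first.
  by rewrite hwc // subrr; apply: ig0.
apply: hreg => //; rewrite mulrBr.
have -> : x`_i * kdiff b v T = kdiff b z T - kdiff b u T.
  by rewrite hdz !ffunE addrAC subrr add0r.
rewrite opprB addrA addrAC; apply: igD; first exact: hz.
exact: kdiffJ.
Qed.

Lemma cardT_eq (T : {set 'I_N}) : (#|T| == N) = (T == setT).
Proof.
apply/idP/idP => [/eqP h|/eqP ->]; last by rewrite cardsT card_ord.
by rewrite eqEcard subsetT cardsT card_ord /= h.
Qed.

Lemma top_cycle s (w : ch) : cycm s N w -> forall k, ideal_gen s (b k * w setT).
Proof.
case=> hwc hwd k; have := hwd (setT :\ k); rewrite kdiffE (bigD1 k) ?setD11 //=.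
rewrite big1 ?addr0; last first.
  move=> j /andP[]; rewrite in_setD1 in_setT andbT negbK => /eqP -> .
  by rewrite eqxx.
rewrite setD1K ?in_setT // => h.
have -> : b k * w setT = eps (setT :\ k) k * (eps (setT :\ k) k * b k * w setT).
  by rewrite !mulrA eps_sq mul1r.
exact: igM.
Qed.

Lemma top_bnd s (w : ch) : bndm s N w -> ideal_gen s (w setT).
Proof.
case=> z [hzc hz]; have := hz setT.
by rewrite (kchain_big (ltnSn N) hzc) kdiff0 ffunE subr0.
Qed.

Lemma bnd_top s (w : ch) : kchain N w -> ideal_gen s (w setT) -> bndm s N w.
Proof.
move=> hwc hu; exists 0; split; first by move=> T _; rewrite ffunE.
move=> T; rewrite kdiff0 ffunE subr0.
case: (eqVneq T setT) => [->//|hT]; rewrite hwc ?cardT_eq //; exact: ig0.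
Qed.

Lemma mainS (x : seq A) (Mt : A -> Prop) :
  (forall i, (i < size x)%N -> span x`_i) -> regseq x -> (size x <= N)%N ->
  (forall u, (forall k, ideal_gen x (b k * u)) ->
     (forall v, Mt v -> ideal_gen x (v * u)) -> ideal_gen x u) ->
  forall r i, r = (size x - i)%N -> (i <= size x)%N ->
  forall w, cycm (take i x) (N - size x + i) w ->
  (forall v, Mt v -> bndm (take i x) (N - size x + i) (kscale v w)) ->
  bndm (take i x) (N - size x + i) w.
Proof.
move=> hsp hreg hgN hbase; elim=> [|r IH] i hr hi w hw hkill.
  have hig : i = size x by apply/eqP; rewrite eqn_leq hi -subn_eq0 -hr.
  move: hw hkill; rewrite hig take_size subnK // => hw hkill.
  apply: bnd_top; first by case: hw.
  apply: hbase; first exact: top_cycle.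
  by move=> v /hkill /top_bnd; rewrite ffunE.
have hi' : (i < size x)%N by rewrite -subn_gt0 -hr.
set j := (N - size x + i)%N in hw hkill *.
have hj1 : (N - size x + i.+1)%N = j.+1 by rewrite addnS.
case: hw => [hwc hwd].
have [z [hzc hz]] := kill (hsp i hi') hwc hwd.
have hzJ : cycm (take i.+1 x) j.+1 z.
  split => // T.
  have -> : kdiff b z T = x`_i * w T - (x`_i * w T - kdiff b z T) by rewrite subKr.
  apply: igB; first by apply: igMr; apply: ig_take_last.
  by apply: ig_take_sub.
apply: (lift hreg hi' hwc hz).
have hr' : r = (size x - i.+1)%N by rewrite subnS -hr.
have := IH i.+1 hr' hi' z; rewrite hj1; apply => // v hv.
have [p [hpc hp]] := hkill v hv.
set e := kscale v z - kscale x`_i p.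
have hec : cycm (take i x) j.+1 e.
  split; first by apply: kchainB; apply: kchainZ.
  move=> T; rewrite /e kdiffB !kdiffZ chB !chZ.
  have -> : v * kdiff b z T - x`_i * kdiff b p T =
    x`_i * (kscale v w T - kdiff b p T) - v * (x`_i * w T - kdiff b z T).
    by rewrite chZ; ring.
  by apply: igB; apply: igM.
have hk : (N < j.+1 + (size x - i))%N by rewrite /j; lia.
have [q [hqc hq]] := vanish hsp hreg (erefl _) (ltnW hi') hk hec.
exists q; split => // T.
have -> : kscale v z T - kdiff b q T = (e T - kdiff b q T) + x`_i * p T.
  by rewrite /e chB !chZ; ring.
apply: igD; first exact: ig_take_sub.
by apply: igMr; apply: ig_take_last.
Qed.

Lemma mainT (x y : seq A) :
  (forall i, (i < size x)%N -> span x`_i) -> regseq x ->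
  (forall i, (i < size y)%N -> span y`_i) -> regseq y ->
  size y = (size x).+1 -> (size x <= N)%N ->
  forall i, (i <= size x)%N ->
  forall w, cycm (take i x) (N - size x + i) w -> bndm (take i x) (N - size x + i) w.
Proof.
move=> hspx hregx hspy hregy hy hgN; elim=> [|i IH] hi w hw.
  have hk : (N < (N - size x + 0) + (size y - 0))%N by rewrite hy; lia.
  rewrite take0 in hw *; have := @vanish y hspy hregy (size y - 0) 0 (erefl _) (leq0n _) _ hk w. by rewrite take0; apply.
have hi' : (i < size x)%N by [].
set j := (N - size x + i)%N.
have hj1 : (N - size x + i.+1)%N = j.+1 by rewrite addnS.
rewrite hj1 in hw *; case: hw => [hzc hzd].
have [u [v [hu huv]]] := decomp hi' hzd.
set u' := res j u; set v' := res j v.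
have hdz : kdiff b w = u' + kscale x`_i v'.
  rewrite -(res_id (kchain_diff hzc)) huv; apply/ffunP => T.
  by rewrite !ffunE; case: ifP => _; rewrite ?mulr0 ?addr0.
have hv' : cycm (take i x) j v'.
  split; first exact: res_chain.
  move=> T; apply: hregx => //.
  have h0 : kdiff b (kdiff b w) T = 0 by rewrite kdiffK ffunE.
  move: h0; rewrite hdz kdiffD kdiffZ chD chZ.
  move/eqP; rewrite addrC addr_eq0 => /eqP ->; apply: igN; apply: kdiffJ.
  exact: resJ.
have [e [hec he]] := IH (ltnW hi') v' hv'.
set zeta := w - kscale x`_i e.
have hzeta : cycm (take i x) j.+1 zeta.
  split; first by apply: kchainB => //; apply: kchainZ.
  move=> T; rewrite /zeta kdiffB kdiffZ hdz chB chD !chZ.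
  have -> : u' T + x`_i * v' T - x`_i * kdiff b e T = u' T + x`_i * (v' T - kdiff b e T).
    by ring.
  by apply: igD; [apply: resJ | apply: igM].
have hk : (N < j.+1 + (size x - i))%N by rewrite /j; lia.
have [q [hqc hq]] := vanish hspx hregx (erefl _) (ltnW hi') hk hzeta.
exists q; split => // T.
have -> : w T - kdiff b q T = (zeta T - kdiff b q T) + x`_i * e T.
  by rewrite /zeta chB chZ; ring.
apply: igD; first exact: ig_take_sub.
by apply: igMr; apply: ig_take_last.
Qed.

Lemma topL (x y : seq A) :
  (forall i, (i < size x)%N -> span x`_i) -> regseq x ->
  (forall i, (i < size y)%N -> span y`_i) -> regseq y ->
  size y = (size x).+1 -> (size x <= N)%N ->
  forall u, (forall k, ideal_gen x (b k * u)) -> ideal_gen x u.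
Proof.
move=> hspx hregx hspy hregy hy hgN u hu.
pose w : ch := [ffun T => if T == setT then u else 0].
have hw : cycm (take (size x) x) (N - size x + size x) w.
  rewrite take_size subnK //; split.
    by move=> T hT; rewrite ffunE -cardT_eq (negbTE hT).
  move=> T; rewrite kdiffE; apply: igsum => j _; rewrite ffunE.
  case: ifP => _; last by rewrite mulr0; apply: ig0.
  by rewrite -mulrA; apply: igM.
have := mainT hspx hregx hspy hregy hy hgN (leqnn _) hw.
by rewrite take_size subnK // => /top_bnd; rewrite ffunE eqxx.
Qed.

End KZ.
End K.

Section Final.
Variable A : comNzRingType.

Lemma span_of_I n (a : 'I_n -> A) s :
  ideal_gen (map a (enum 'I_n)) s -> span a s.
Proof.
case=> c ->.
have hs : size (map a (enum 'I_n)) = n by rewrite size_map size_enum_ord.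
rewrite (sum_ord_eq hs (fun k => c k * (map a (enum 'I_n))`_k)).
exists (fun k => c k); apply: eq_bigr => k _.
by rewrite (nth_map k) ?size_enum_ord // nth_ord_enum.
Qed.

Lemma I_of_span n (a : 'I_n -> A) s :
  span a s -> ideal_gen (map a (enum 'I_n)) s.
Proof.
case=> c ->.
have hs : size (map a (enum 'I_n)) = n by rewrite size_map size_enum_ord.
pose c' k := if (k < n)%N =P true is ReflectT h then c (Ordinal h) else 0.
exists c'; rewrite (sum_ord_eq hs (fun k => c' k * (map a (enum 'I_n))`_k)).
apply: eq_bigr => k _; rewrite (nth_map k) ?size_enum_ord // nth_ord_enum.
rewrite /c'; case: eqP => // h; first by congr (c _ * _); apply: val_inj.
by rewrite ltn_ord in h.
Qed.

Definition bcat n (a : 'I_n -> A) (ys : seq A) (l : 'I_(n + size ys)) : A :=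
  match split l with inl i => a i | inr i => ys`_i end.
Arguments bcat {n} a ys l.

Lemma bcat_l n (a : 'I_n -> A) ys (i : 'I_n) : bcat a ys (lshift _ i) = a i.
Proof. by rewrite /bcat (unsplitK (inl _ i)). Qed.

Lemma bcat_r n (a : 'I_n -> A) ys (i : 'I_(size ys)) : bcat a ys (rshift _ i) = ys`_i.
Proof. by rewrite /bcat (unsplitK (inr _ i)). Qed.

Lemma span_bcat_l n (a : 'I_n -> A) ys s : span a s -> span (bcat a ys) s.
Proof.
case=> c ->; exists (fun l => match split l with inl i => c i | inr _ => 0 end).
rewrite big_split_ord /= [X in _ + X]big1 ?addr0; last first.
  by move=> i _; rewrite (unsplitK (inr _ i)) mul0r.
by apply: eq_bigr => i _; rewrite (unsplitK (inl _ i)) bcat_l.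
Qed.

Lemma span_bcat_r n (a : 'I_n -> A) ys i : (i < size ys)%N -> span (bcat a ys) ys`_i.
Proof.
move=> hi; pose l0 := rshift n (Ordinal hi).
exists (fun l => if l == l0 then 1 else 0).
rewrite (bigD1 l0) //= eqxx mul1r big1 ?addr0; first by rewrite bcat_r.
by move=> l /negbTE ->; rewrite mul0r.
Qed.

End Final.
Arguments bcat {A n} a ys l.


Unset Implicit Arguments.
Theorem mainTheorem8 (A : comNzRingType) (G : nat -> A -> Prop)
  (HG : is_Ngrading G) (Hnoeth : noetherian A)
  (n : nat) (a : 'I_n -> A) (d : nat)
  (Hd : grade_eq (ideal_gen (map a (enum 'I_n))) d)
  (Hdepth : grade_ge (Aplus G) d.+1) :
  forall x : {ffun {set 'I_n} -> A},
    kcycle a (n - d) x ->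
    (exists t : nat, forall y, ideal_pow (Aplus G) t y ->
        kboundary a (n - d) (kscale y x)) ->
    kboundary a (n - d) x.
Proof.
move=> w [hwc hwd] [t ht].
case: Hd => [HI1 [[xs [hxs [hxI [hxreg _]]]] _]].
case: Hdepth => ys [hys [hyM [hyreg _]]].
have hspx : forall i, (i < size xs)%N -> span a xs`_i.
  by move=> i hi; apply: span_of_I; apply: hxI.
have hdn : (d <= n)%N.
  rewrite leqNgt; apply/negP => hnd.
  pose w0 : {ffun {set 'I_n} -> A} := [ffun T => if T == set0 then 1 else 0].
  have hc : cycm a (take 0 xs) 0 w0.
    split.
      move=> T hT; rewrite ffunE; case: eqP => // hT0; by move: hT; rewrite hT0 cards0.
    move=> T; rewrite kdiffE big1 ?take0; first exact: ig0.
    move=> j _; rewrite ffunE.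
    have /negbTE -> : j |: T != set0 by apply/set0Pn; exists j; rewrite setU11.
    by rewrite mulr0.
  have hk : (n < 0 + (size xs - 0))%N by rewrite hxs add0n subn0.
  have [z [hzc hz]] := vanish hspx hxreg (erefl _) (leq0n _) hk hc.
  move: (hz set0); rewrite take0 ig_nil ffunE eqxx => /eqP; rewrite subr_eq0 => /eqP h1.
  apply: HI1; rewrite h1 kdiffE; apply: I_of_span.
  exists (fun j => @eps A n set0 j * z (j |: set0)).
  rewrite big_mkcond; apply: eq_bigr => j _; rewrite in_set0 /=; ring.
have hbase : forall u, (forall k, ideal_gen xs (a k * u)) ->
    (forall v, ideal_pow (Aplus G) t v -> ideal_gen xs (v * u)) -> ideal_gen xs u.
  move=> u hu hv.
  have hspx' : forall i, (i < size xs)%N -> span (bcat a ys) xs`_i.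
    by move=> i hi; apply: span_bcat_l; apply: hspx.
  have hspy : forall i, (i < size ys)%N -> span (bcat a ys) ys`_i.
    by move=> i hi; apply: span_bcat_r.
  have hy1 : size ys = (size xs).+1 by rewrite hys hxs.
  have hxN : (size xs <= n + size ys)%N by rewrite hxs hys; lia.
  have hL := topL hspx' hxreg hspy hyreg hy1 hxN.
  have hQ : forall k, (k <= t)%N -> forall v, ideal_pow (Aplus G) (t - k) v ->
      ideal_gen xs (v * u).
    elim=> [|k IH] hk v hvv; first by rewrite subn0 in hvv; exact: hv v hvv.
    apply: hL => l; rewrite /bcat; case: (split l) => i.
      by rewrite mulrCA; apply: igM; apply: hu.
    rewrite mulrA; apply: (IH (ltnW hk)).
    rewrite -(subnSK hk) /ideal_pow iterS.
    exists 1%N, (fun _ => ys`_i), (fun _ => v); split; first by move=> _; apply: hyM.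
    by split; [move=> _; exact: hvv | rewrite big_ord1].
  by have := hQ t (leqnn t) 1; rewrite subnn mul1r; apply.
have hcyc : cycm a (take 0 xs) (n - size xs + 0) w.
  rewrite take0 hxs addn0; split => // T; rewrite hwd ffunE; exact: ig0.
have hkill : forall v, ideal_pow (Aplus G) t v ->
    bndm a (take 0 xs) (n - size xs + 0) (kscale v w).
  move=> v hv; have [y [hyc hy]] := ht v hv.
  rewrite take0 hxs addn0; exists y; split => // T.
  by rewrite hy subrr; exact: ig0.
have := mainS hspx hxreg (ltac:(by rewrite hxs)) hbase (erefl _) (leq0n _) hcyc hkill.
rewrite take0 hxs addn0 => -[z [hzc hz]].
exists z; split => //; apply/ffunP => T.
by have := hz T; rewrite ig_nil => /eqP; rewrite subr_eq0 => /eqP.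
Qed.
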